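(* Let $c^{(k)}$ be an admissible control and $\rho^{(k)}$ the corresponding solution of the master equation. Let $c^{(k+1)}=(u^{(k+1)},n_1^{(k+1)},n_2^{(k+1)})$ be an admissible control and $\chi^{(k+1)}$ the solution of the adjoint system with control $c^{(k+1)}$ such that for every $t\in[0,T]$: $u^{(k+1)}(t)\in\arg\max_{|u|\le\mu}\mathcal K^u(\chi^{(k+1)}(t),\rho^{(k)}(t))\,u$ and $n_j^{(k+1)}(t)\in\arg\max_{n_j\in[0,n_{\max}]}\mathcal K^{n_j}(\chi^{(k+1)}(t),\rho^{(k)}(t))\,n_j$, $j=1,2$. Then $\langle\mathcal K^c(\chi^{(k+1)}(t),\rho^{(k)}(t)),c^{(k+1)}(t)-c^{(k)}(t)\rangle\ge0$ for all $t\in[0,T]$ and $J_1(c^{(k+1)})\ge J_1(c^{(k)})$. Moreover $J_1(c^{(k+1)})>J_1(c^{(k)})$ if at least one of the sets $\{t: u^{(k+1)}(t)\ne u^{(k)}(t),\ \mathcal K^u(\chi^{(k+1)}(t),\rho^{(k)}(t))\ne0\}$, $\{t: n_j^{(k+1)}(t)\ne n_j^{(k)}(t),\ \mathcal K^{n_j}(\chi^{(k+1)}(t),\rho^{(k)}(t))\ne0\}$ ($j=1,2$) has positive Lebesgue measure.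
   Context: Let $\sigma_x,\sigma_y,\sigma_z$ be the Pauli matrices, $\mathbb I_2,\mathbb I_4$ identity matrices, $\sigma^+=\begin{pmatrix}0&0\\1&0\end{pmatrix}$, $\sigma^-=\begin{pmatrix}0&1\\0&0\end{pmatrix}$, $\sigma_1^\pm=\sigma^\pm\otimes\mathbb I_2$, $\sigma_2^\pm=\mathbb I_2\otimes\sigma^\pm$, $W_1=\sigma_z\otimes\mathbb I_2$, $W_2=\mathbb I_2\otimes\sigma_z$. Fix parameters $\varepsilon,\omega_j,\Lambda_j,\Omega_j>0$ ($j=1,2$), $H_0=\frac{\omega_1}{2}W_1+\frac{\omega_2}{2}W_2$, and a Hermitian $4\times4$ matrix $V$ (in the paper $V=Q_1\otimes\mathbb I_2+\mathbb I_2\otimes Q_2$ or $V=Q_1\otimes Q_2$ with $Q_j=\sin\theta_j\cos\varphi_j\sigma_x+\sin\theta_j\sin\varphi_j\sigma_y+\cos\theta_j\sigma_z$). For $c=(u,n_1,n_2)\in\mathbb R^3$ let $H_c=H_0+\varepsilon\sum_{j=1}^2\Lambda_j n_jW_j+uV$ and $$\mathcal L^D_n(\rho)=\sum_{j=1}^2\Big[\Omega_j(n_j+1)\big(2\sigma_j^-\rho\sigma_j^+-\{\sigma_j^+\sigma_j^-,\rho\}\big)+\Omega_jn_j\big(2\sigma_j^+\rho\sigma_j^--\{\sigma_j^-\sigma_j^+,\rho\}\big)\Big],$$ $$\mathcal L^{D,\dagger}_n(\chi)=\sum_{j=1}^2\Big[\Omega_j(n_j+1)\big(2\sigma_j^+\chi\sigma_j^--\{\sigma_j^+\sigma_j^-,\chi\}\big)+\Omega_jn_j\big(2\sigma_j^-\chi\sigma_j^+-\{\sigma_j^-\sigma_j^+,\chi\}\big)\Big],$$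 where $\{A,B\}=AB+BA$, $[A,B]=AB-BA$. Fix $T>0$, $\mu,n_{\max}>0$, $Q=[-\mu,\mu]\times[0,n_{\max}]^2$; admissible controls are piecewise continuous $c=(u,n_1,n_2):[0,T]\to Q$. Fix density matrices $\rho_0,\rho_{\rm target}$ ($4\times 4$, positive semidefinite, trace one). The master equation is $\dot\rho(t)=-i[H_{c(t)},\rho(t)]+\varepsilon\mathcal L^D_{n(t)}(\rho(t))$, $\rho(0)=\rho_0$; the adjoint system is $\dot\chi(t)=-i[H_{c(t)},\chi(t)]-\varepsilon\mathcal L^{D,\dagger}_{n(t)}(\chi(t))$, $\chi(T)=\rho_{\rm target}$ (solved backward). For matrices, $\langle A,B\rangle={\rm Tr}(A^\dagger B)$. The objective is $J_1(c)={\rm Tr}(\rho(T)\rho_{\rm target})$ where $\rho$ solves the master equation with control $c$. The switching functions $\mathcal K^c=(\mathcal K^u,\mathcal K^{n_1},\mathcal K^{n_2})$ are the coefficients of $u,n_1,n_2$ in $\langle\chi,-i[H_c,\rho]+\varepsilon\mathcal L^D_n(\rho)\rangle$: $\mathcal K^u(\chi,\rho)=\langle\chi,-i[V,\rho]\rangle$, $\mathcal K^{n_j}(\chi,\rho)=\big\langle\chi,-i\varepsilon\Lambda_j[W_j,\rho]+\varepsilon\Omega_j\big(2\sigma_j^-\rho\sigma_j^++2\sigma_j^+\rho\sigma_j^--2\rho\big)\big\rangle$, $j=1,2$ (real for Hermitian $\chi,\rho$). *)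

(* Defs.v *)
From HB Require Import structures.
From mathcomp Require Import all_boot all_order all_algebra.
From mathcomp Require Import all_classical all_reals all_analysis.
From mathcomp Require Import complex mxtens.

Set Implicit Arguments.
Unset Strict Implicit.
Unset Printing Implicit Defensive.

Import Order.TTheory GRing.Theory Num.Theory.
Import numFieldNormedType.Exports.
Local Open Scope classical_set_scope.
Local Open Scope ring_scope.

Section Model.
Variable R : realType.
Local Notation C := (R[i]).
Local Notation M4 := ('M[C]_(4, 4)).

Definition iC : C := Complex 0 1.
Definition rC (x : R) : C := Complex x 0.

Definition adj4 (A : M4) : M4 := (map_mx Num.conj A)^T.

Definition hermitian4 (A : M4) : Prop := adj4 A = A.

Definition density (A : M4) : Prop :=
  [/\ hermitian4 A,
      (forall v : 'cV[C]_4, 0 <= ((map_mx Num.conj v)^T *m A *m v) 0 0)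
    & \tr A = 1].

Definition hs (A B : M4) : C := \tr (adj4 A *m B).

Definition comm (A B : M4) : M4 := A *m B - B *m A.
Definition acomm (A B : M4) : M4 := A *m B + B *m A.

Definition sig_plus : 'M[C]_(2, 2) :=
  \matrix_(i < 2, j < 2) (if (i == 1 :> nat) && (j == 0 :> nat) then 1 else 0).
Definition sig_minus : 'M[C]_(2, 2) :=
  \matrix_(i < 2, j < 2) (if (i == 0 :> nat) && (j == 1 :> nat) then 1 else 0).
Definition sig_z : 'M[C]_(2, 2) :=
  \matrix_(i < 2, j < 2)
    (if i == j then (if i == 0 :> nat then 1 else -1) else 0).

Definition kron2 (A B : 'M[C]_(2, 2)) : M4 := A *t B.

(* index j : 'I_2 ; j = 0 stands for the paper's j = 1, j = 1 for j = 2 *)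
Definition sp (j : 'I_2) : M4 :=
  if j == 0 :> nat then kron2 sig_plus 1%:M else kron2 1%:M sig_plus.
Definition sm (j : 'I_2) : M4 :=
  if j == 0 :> nat then kron2 sig_minus 1%:M else kron2 1%:M sig_minus.
Definition Wm (j : 'I_2) : M4 :=
  if j == 0 :> nat then kron2 sig_z 1%:M else kron2 1%:M sig_z.

Variables (eps : R) (om La Om : 'I_2 -> R) (V : M4).

Definition H0 : M4 := \sum_(j < 2) rC (om j / 2) *: Wm j.

Definition Hc (u : R) (n : 'I_2 -> R) : M4 :=
  H0 + \sum_(j < 2) rC (eps * La j * n j) *: Wm j + rC u *: V.

Definition LD (n : 'I_2 -> R) (rho : M4) : M4 :=
  \sum_(j < 2)
    (rC (Om j * (n j + 1)) *:
       (2%:R *: (sm j *m rho *m sp j) - acomm (sp j *m sm j) rho)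
   + rC (Om j * n j) *:
       (2%:R *: (sp j *m rho *m sm j) - acomm (sm j *m sp j) rho)).

Definition LDdag (n : 'I_2 -> R) (chi : M4) : M4 :=
  \sum_(j < 2)
    (rC (Om j * (n j + 1)) *:
       (2%:R *: (sp j *m chi *m sm j) - acomm (sp j *m sm j) chi)
   + rC (Om j * n j) *:
       (2%:R *: (sm j *m chi *m sp j) - acomm (sm j *m sp j) chi)).

Definition master_rhs (u : R) (n : 'I_2 -> R) (rho : M4) : M4 :=
  (- iC) *: comm (Hc u n) rho + rC eps *: LD n rho.
Definition adjoint_rhs (u : R) (n : 'I_2 -> R) (chi : M4) : M4 :=
  (- iC) *: comm (Hc u n) chi - rC eps *: LDdag n chi.

(* switching functions (real parts; they are real for Hermitian chi, rho) *)
Definition Ku (chi rho : M4) : R :=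
  complex.Re (hs chi ((- iC) *: comm V rho)).
Definition Kn (j : 'I_2) (chi rho : M4) : R :=
  complex.Re (hs chi
    ((- iC) *: (rC (eps * La j) *: comm (Wm j) rho)
     + rC (eps * Om j) *:
         (2%:R *: (sm j *m rho *m sp j) + 2%:R *: (sp j *m rho *m sm j)
          - 2%:R *: rho))).

End Model.

Section Analysis.
Variable R : realType.
Local Notation C := (R[i]).
Local Notation M4 := ('M[C]_(4, 4)).

Definition piecewise_continuous (T : R) (f : R -> R) : Prop :=
  exists (m : nat) (p : nat -> R),
    [/\ p 0%N = 0, p m = T,
        (forall k, (k < m)%N -> p k < p k.+1)
      & forall k, (k < m)%N ->
          [/\ {within `]p k, p k.+1[, continuous f},
              (exists l : R, f x @[x --> (p k)^'+] --> l)
            & (exists l : R, f x @[x --> (p k.+1)^'-] --> l)]].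

Definition admissible (T mu nmax : R) (u : R -> R) (n : 'I_2 -> R -> R)
  : Prop :=
  [/\ piecewise_continuous T u,
      (forall j, piecewise_continuous T (n j))
    & forall t, 0 <= t <= T ->
        `|u t| <= mu /\ forall j, 0 <= n j t <= nmax].

(* X : R -> M4 solves X' = F t X on [0,T]: entrywise (real and imaginary
   parts) continuous on [0,T] and differentiable with the prescribed
   derivative at every t in ]0,T[ except at finitely many points (the
   switching points of the piecewise continuous control). *)
Definition solves_on (T : R) (F : R -> M4 -> M4) (X : R -> M4) : Prop :=
  (forall i j,
     {within `[0, T], continuous (fun t => complex.Re (X t i j))} /\
     {within `[0, T], continuous (fun t => complex.Im (X t i j))}) /\
  exists Z : set R, finite_set Z /\
    forall t, 0 < t < T -> ~ Z t -> forall i j,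
      is_derive t (1 : R) (fun s => complex.Re (X s i j))
                          (complex.Re (F t (X t) i j)) /\
      is_derive t (1 : R) (fun s => complex.Im (X s i j))
                          (complex.Im (F t (X t) i j)).

Definition master_solution (eps : R) (om La Om : 'I_2 -> R) (V : M4)
  (T : R) (rho0 : M4) (u : R -> R) (n : 'I_2 -> R -> R) (rho : R -> M4)
  : Prop :=
  rho 0 = rho0 /\
  solves_on T (fun t X => master_rhs eps om La Om V (u t) (fun j => n j t) X)
    rho.

Definition adjoint_solution (eps : R) (om La Om : 'I_2 -> R) (V : M4)
  (T : R) (rhotarget : M4) (u : R -> R) (n : 'I_2 -> R -> R) (chi : R -> M4)
  : Prop :=
  chi T = rhotarget /\
  solves_on T (fun t X => adjoint_rhs eps om La Om V (u t) (fun j => n j t) X)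
    chi.

(* J_1(c) = Tr(rho(T) rho_target), rho the solution with control c
   (real, since both matrices are Hermitian) *)
Definition J1 (T : R) (rhotarget : M4) (rho : R -> M4) : R :=
  complex.Re (\tr (rho T *m rhotarget)).

Definition argmax_on (A : set R) (f : R -> R) : set R :=
  [set x | A x /\ forall y, A y -> f y <= f x].

End Analysis.

(* Main.v *)
Require Import Defs.
From HB Require Import structures.
From mathcomp Require Import all_boot all_order all_algebra.
From mathcomp Require Import all_classical all_reals all_analysis.
From mathcomp Require Import complex mxtens.
From mathcomp Require Import ring lra.
Import Order.TTheory GRing.Theory Num.Theory.
Import numFieldNormedType.Exports.
Local Open Scope classical_set_scope.
Local Open Scope ring_scope.

Section Alg.
Variable R : realType.
Local Notation C := (R[i]).
Local Notation M4 := ('M[C]_(4, 4)).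
Implicit Types (A B X Y : M4).

Lemma adjD A B : adj4 (A + B) = adj4 A + adj4 B.
Proof. by rewrite /adj4 map_mxD linearD. Qed.
Lemma adjN A : adj4 (- A) = - adj4 A.
Proof. by rewrite /adj4 map_mxN linearN. Qed.
Lemma adjB A B : adj4 (A - B) = adj4 A - adj4 B.
Proof. by rewrite adjD adjN. Qed.
Lemma adjZ (c : C) A : adj4 (c *: A) = Num.conj c *: adj4 A.
Proof. by rewrite /adj4 map_mxZ linearZ. Qed.
Lemma adjM A B : adj4 (A *m B) = adj4 B *m adj4 A.
Proof. by rewrite /adj4 map_mxM trmx_mul. Qed.

Lemma tr_cyc A B : \tr (A *m B) = \tr (B *m A).
Proof. exact: mxtrace_mulC. Qed.

Lemma hsDl A B Y : hs (A + B) Y = hs A Y + hs B Y.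
Proof. by rewrite /hs adjD mulmxDl mxtraceD. Qed.
Lemma hsBl A B Y : hs (A - B) Y = hs A Y - hs B Y.
Proof. by rewrite /hs adjB mulmxBl raddfB. Qed.
Lemma hsZl c A Y : hs (c *: A) Y = Num.conj c * hs A Y.
Proof. by rewrite /hs adjZ -scalemxAl mxtraceZ. Qed.
Lemma hsDr X A B : hs X (A + B) = hs X A + hs X B.
Proof. by rewrite /hs mulmxDr mxtraceD. Qed.
Lemma hsBr X A B : hs X (A - B) = hs X A - hs X B.
Proof. by rewrite /hs mulmxBr raddfB. Qed.
Lemma hsZr c X A : hs X (c *: A) = c * hs X A.
Proof. by rewrite /hs -scalemxAr mxtraceZ. Qed.

Lemma hs_comm X Y H : hermitian4 H -> hs (comm H X) Y = hs X (comm H Y).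
Proof.
move=> hH; rewrite /hs /comm adjB !adjM hH mulmxBl mulmxBr !raddfB /=.
by rewrite -!mulmxA [\tr (H *m _)]tr_cyc -!mulmxA.
Qed.

Lemma hs_acomm X Y H : hermitian4 H -> hs (acomm H X) Y = hs X (acomm H Y).
Proof.
move=> hH; rewrite /hs /acomm adjD !adjM hH mulmxDl mulmxDr !mxtraceD /=.
by rewrite -!mulmxA [\tr (H *m _)]tr_cyc -!mulmxA addrC.
Qed.

Lemma hs_sand P Q X Y : hs (P *m X *m Q) Y = hs X (adj4 P *m Y *m adj4 Q).
Proof.
by rewrite /hs !adjM -!mulmxA tr_cyc !mulmxA.
Qed.

Definition adj2 (A : 'M[C]_(2,2)) : 'M[C]_(2,2) := (map_mx Num.conj A)^T.

Lemma adj_kron (A1 B1 : 'M[C]_(2,2)) : adj4 (kron2 A1 B1) = kron2 (adj2 A1) (adj2 B1).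
Proof. by apply/matrixP => i j; rewrite !mxE rmorphM. Qed.

Lemma adj2_sp : adj2 (sig_plus R) = (sig_minus R).
Proof.
apply/matrixP => i j; rewrite !mxE.
by case: i => [[|[|//]]] ?; case: j => [[|[|//]]] ? /=; rewrite ?conjC0 ?conjC1.
Qed.
Lemma adj2_sm : adj2 (sig_minus R) = (sig_plus R).
Proof.
apply/matrixP => i j; rewrite !mxE.
by case: i => [[|[|//]]] ?; case: j => [[|[|//]]] ? /=; rewrite ?conjC0 ?conjC1.
Qed.
Lemma adj2_sz : adj2 (sig_z R) = (sig_z R).
Proof.
apply/matrixP => i j; rewrite !mxE.
by case: i => [[|[|//]]] ?; case: j => [[|[|//]]] ? /=; rewrite ?conjC0 ?conjC1 ?conjCN1.
Qed.
Lemma adj2_1 : adj2 1%:M = 1%:M.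
Proof.
apply/matrixP => i j; rewrite !mxE.
by case: i => [[|[|//]]] ?; case: j => [[|[|//]]] ? /=; rewrite ?conjC0 ?conjC1.
Qed.

Lemma adj_sp j : adj4 (sp R j) = sm R j.
Proof. by rewrite /sp /sm; case: ifP => _; rewrite adj_kron ?adj2_sp adj2_1. Qed.
Lemma adj_sm j : adj4 (sm R j) = sp R j.
Proof. by rewrite /sp /sm; case: ifP => _; rewrite adj_kron ?adj2_sm adj2_1. Qed.
Lemma adj_W j : adj4 (Wm R j) = Wm R j.
Proof. by rewrite /Wm; case: ifP => _; rewrite adj_kron ?adj2_sz adj2_1. Qed.

Lemma tensDl (A1 A2 B1 : 'M[C]_(2,2)) : kron2 (A1 + A2) B1 = kron2 A1 B1 + kron2 A2 B1.
Proof. by apply/matrixP => i j; rewrite !mxE mulrDl. Qed.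
Lemma tensDr (A1 B1 B2 : 'M[C]_(2,2)) : kron2 A1 (B1 + B2) = kron2 A1 B1 + kron2 A1 B2.
Proof. by apply/matrixP => i j; rewrite !mxE mulrDr. Qed.
Lemma tens11 : kron2 (1%:M : 'M[C]_2) 1%:M = 1%:M.
Proof.
apply/matrixP => i j.
move: i j; change (forall i j : 'I_(2*2), (kron2 (1%:M : 'M[C]_2) 1%:M) i j = (1%:M : 'M[C]_(2*2)) i j) => i j.
case: (mxtens_indexP i) => i0 i1; case: (mxtens_indexP j) => j0 j1.
rewrite /kron2 (tensmxE (1%:M : 'M[C]_2) (1%:M : 'M[C]_2)) !mxE (inj_eq (can_inj (@mxtens_indexK _ _))) xpair_eqE.
by case: eqP; case: eqP; rewrite /= ?mulr1 ?mulr0 ?mul0r.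
Qed.
Lemma pm2 : (sig_plus R) *m (sig_minus R) + (sig_minus R) *m (sig_plus R) = 1%:M.
Proof.
apply/matrixP => i j; rewrite !mxE !big_ord_recr !big_ord0 /= !mxE.
by case: i => [[|[|//]]] ?; case: j => [[|[|//]]] ? /=; rewrite ?mulr0 ?mul0r ?mulr1 ?addr0 ?add0r.
Qed.

Lemma kron_mul (A1 B1 A2 B2 : 'M[C]_2) :
  kron2 A1 B1 *m kron2 A2 B2 = kron2 (A1 *m A2) (B1 *m B2).
Proof. exact: (@tensmx_mul _ 2 2 2 2 2 2). Qed.

Lemma spsm j : sp R j *m sm R j + sm R j *m sp R j = 1%:M.
Proof.
rewrite /sp /sm; case: ifP => _; rewrite !kron_mul !mulmx1.
  by rewrite -[_ + _]tensDl pm2 tens11.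
by rewrite -[_ + _]tensDr pm2 tens11.
Qed.

Lemma rCE (x : R) : rC x = (x%:C)%C.
Proof. by []. Qed.

Lemma conj_rC (x : R) : Num.conj (rC x) = rC x.
Proof. by rewrite rCE; change ((x%:C)^*%C = x%:C)%C; rewrite conjc_real. Qed.

Lemma conj_NiC : Num.conj (- iC R) = iC R.
Proof. by apply/eqP; rewrite eq_complex /= opprK oppr0 !eqxx. Qed.

Lemma ReD (x y : C) : complex.Re (x + y) = complex.Re x + complex.Re y.
Proof. by case: x; case: y. Qed.
Lemma ReN (x : C) : complex.Re (- x) = - complex.Re x.
Proof. by case: x. Qed.
Lemma ReB (x y : C) : complex.Re (x - y) = complex.Re x - complex.Re y.
Proof. by rewrite ReD ReN. Qed.
Lemma ReM_rC (a : R) (x : C) : complex.Re (rC a * x) = a * complex.Re x.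
Proof. by case: x => p q /=; rewrite mul0r subr0. Qed.

Lemma hermH0 (eps : R) (om La : 'I_2 -> R) (V : M4) (u : R) (n : 'I_2 -> R) : hermitian4 V ->
  hermitian4 (Hc eps om La V u n).
Proof.
move=> hV; rewrite /hermitian4 /Hc /H0 !adjD !big_ord_recr !big_ord0 /= !add0r.
by rewrite !adjD !adjZ !conj_rC !adj_W hV.
Qed.

Lemma herm_spsm j : hermitian4 (sp R j *m sm R j).
Proof. by rewrite /hermitian4 adjM adj_sp adj_sm. Qed.
Lemma herm_smsp j : hermitian4 (sm R j *m sp R j).
Proof. by rewrite /hermitian4 adjM adj_sp adj_sm. Qed.

Lemma adj0 : adj4 (0 : M4) = 0.
Proof. by rewrite /adj4 map_mx0 trmx0. Qed.

Lemma hs_suml (F : 'I_2 -> M4) Y : hs (\sum_(j < 2) F j) Y = \sum_(j < 2) hs (F j) Y.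
Proof.
apply: (big_morph (fun A => hs A Y)) => [A B|]; first exact: hsDl.
by rewrite /hs adj0 mul0mx mxtrace0.
Qed.
Lemma hs_sumr (F : 'I_2 -> M4) X : hs X (\sum_(j < 2) F j) = \sum_(j < 2) hs X (F j).
Proof.
apply: (big_morph (fun A => hs X A)) => [A B|]; first exact: hsDr.
by rewrite /hs mulmx0 mxtrace0.
Qed.

Lemma hs_lin_l (a b : C) P1 Q1 P2 Q2 Y :
  hs (a *: (2%:R *: P1 - Q1) + b *: (2%:R *: P2 - Q2)) Y =
  Num.conj a * (2%:R * hs P1 Y - hs Q1 Y) + Num.conj b * (2%:R * hs P2 Y - hs Q2 Y).
Proof. by rewrite !hsDl !hsZl !hsBl !hsZl conjC_nat. Qed.
Lemma hs_lin_r (a b : C) P1 Q1 P2 Q2 X :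
  hs X (a *: (2%:R *: P1 - Q1) + b *: (2%:R *: P2 - Q2)) =
  a * (2%:R * hs X P1 - hs X Q1) + b * (2%:R * hs X P2 - hs X Q2).
Proof. by rewrite !hsDr !hsZr !hsBr !hsZr. Qed.

Lemma LD_dual (Om n : 'I_2 -> R) X Y :
  hs (LDdag Om n X) Y = hs X (LD Om n Y).
Proof.
rewrite /LDdag /LD hs_suml hs_sumr; apply: eq_bigr => j _.
rewrite hs_lin_l hs_lin_r !conj_rC.
rewrite (hs_sand (sp R j) (sm R j)) (hs_sand (sm R j) (sp R j)) !adj_sp !adj_sm.
rewrite (hs_acomm X Y _ (herm_spsm j)) (hs_acomm X Y _ (herm_smsp j)).
done.
Qed.

Lemma hs_lin2_l (a b : C) P Q Y :
  hs (a *: P - b *: Q) Y = Num.conj a * hs P Y - Num.conj b * hs Q Y.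
Proof. by rewrite hsBl !hsZl. Qed.
Lemma hs_lin2_r (a b : C) P Q X :
  hs X (a *: P + b *: Q) = a * hs X P + b * hs X Q.
Proof. by rewrite hsDr !hsZr. Qed.

Lemma adjoint_identity (eps : R) (om La Om : 'I_2 -> R) (V : M4) (u : R)
  (n : 'I_2 -> R) X Y : hermitian4 V ->
  hs (adjoint_rhs eps om La Om V u n X) Y + hs X (master_rhs eps om La Om V u n Y) = 0.
Proof.
move=> hV; rewrite /adjoint_rhs /master_rhs hs_lin2_l hs_lin2_r conj_NiC conj_rC.
rewrite (hs_comm X Y _ (hermH0 eps om La V u n hV)) LD_dual.
move: (hs X _) (hs X _) => p q.
by rewrite /iC; ring.
Qed.

Lemma commDl A B Y : comm (A + B) Y = comm A Y + comm B Y.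
Proof.
rewrite /comm mulmxDl mulmxDr.
by rewrite -!addrA; congr (_ + _); rewrite opprD addrCA.
Qed.
Lemma commZl (c : C) A Y : comm (c *: A) Y = c *: comm A Y.
Proof. by rewrite /comm -scalemxAl -scalemxAr scalerBr. Qed.
Lemma comm_suml (F : 'I_2 -> M4) Y : comm (\sum_(j < 2) F j) Y = \sum_(j < 2) comm (F j) Y.
Proof.
apply: (big_morph (fun A => comm A Y)) => [A B|]; first exact: commDl.
by rewrite /comm mul0mx mulmx0 subrr.
Qed.

Lemma acomm_smsp j Y :
  acomm (sm R j *m sp R j) Y = 2%:R *: Y - acomm (sp R j *m sm R j) Y.
Proof.
apply/eqP; rewrite eq_sym subr_eq addrC; apply/eqP.
have := spsm j; rewrite /acomm => E.
rewrite addrACA -mulmxDl -mulmxDr E mul1mx mulmx1.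
by rewrite -[Y in Y + Y]scale1r -scalerDl.
Qed.

Lemma hs_master (eps : R) (om La Om : 'I_2 -> R) (V : M4) (u : R)
  (n : 'I_2 -> R) X Y :
  hs X (master_rhs eps om La Om V u n Y) =
  (- iC R) * (hs X (comm (H0 om) Y)
      + \sum_(j < 2) rC (eps * La j * n j) * hs X (comm (Wm R j) Y)
      + rC u * hs X (comm V Y))
  + rC eps * \sum_(j < 2)
      (rC (Om j * (n j + 1)) * (2%:R * hs X (sm R j *m Y *m sp R j)
                                 - hs X (acomm (sp R j *m sm R j) Y))
     + rC (Om j * n j) * (2%:R * hs X (sp R j *m Y *m sm R j)
                   - (2%:R * hs X Y - hs X (acomm (sp R j *m sm R j) Y)))).
Proof.
rewrite /master_rhs hs_lin2_r; congr (_ * _ + _ * _).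
  rewrite /Hc commDl hsDr commDl hsDr.
  rewrite (comm_suml (fun j => rC (eps * La j * n j) *: Wm R j)).
  rewrite (hs_sumr (fun j => comm (rC (eps * La j * n j) *: Wm R j) Y)) commZl hsZr.
  by congr (_ + _ + _); apply: eq_bigr => j _; rewrite commZl hsZr.
rewrite /LD hs_sumr; apply: eq_bigr => j _.
rewrite hs_lin_r; congr (_ * (_ - _) + _ * (_ - _)).
by rewrite acomm_smsp hsBr hsZr.
Qed.

Lemma hs_Kform (a b c : C) W S1 S2 Z X :
  hs X (a *: (b *: W) + c *: (2%:R *: S1 + 2%:R *: S2 - 2%:R *: Z)) =
  a * (b * hs X W) + c * (2%:R * hs X S1 + 2%:R * hs X S2 - 2%:R * hs X Z).
Proof. by rewrite hsDr !hsZr hsBr hsDr !hsZr. Qed.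

Lemma Re_sum2 (F : 'I_2 -> C) : complex.Re (\sum_(j < 2) F j) = \sum_(j < 2) complex.Re (F j).
Proof. by rewrite !big_ord_recr !big_ord0 /= !ReD. Qed.

Lemma scal_id (i : C) (eps u1 u0 : R) (La Om n1 n0 : 'I_2 -> R) (h0 hv hy : C)
  (w a b c : 'I_2 -> C) :
  i * (h0 + \sum_(j < 2) rC (eps * La j * n1 j) * w j + rC u1 * hv)
  + rC eps * \sum_(j < 2)
      (rC (Om j * (n1 j + 1)) * (2%:R * a j - c j)
     + rC (Om j * n1 j) * (2%:R * b j - (2%:R * hy - c j)))
  - (i * (h0 + \sum_(j < 2) rC (eps * La j * n0 j) * w j + rC u0 * hv)
  + rC eps * \sum_(j < 2)
      (rC (Om j * (n0 j + 1)) * (2%:R * a j - c j)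
     + rC (Om j * n0 j) * (2%:R * b j - (2%:R * hy - c j))))
  = rC (u1 - u0) * (i * hv) +
    \sum_(j < 2) rC (n1 j - n0 j) *
      (i * (rC (eps * La j) * w j) +
       rC (eps * Om j) * (2%:R * a j + 2%:R * b j - 2%:R * hy)).
Proof.
rewrite !big_ord_recr !big_ord0 /= !add0r.
rewrite !rCE !rmorphM ?rmorphB ?rmorphD ?rmorphN ?rmorph1.
ring.
Qed.

Lemma diff_identity (eps : R) (om La Om : 'I_2 -> R) (V : M4)
  (u1 u0 : R) (n1 n0 : 'I_2 -> R) X Y :
  complex.Re (hs X (master_rhs eps om La Om V u1 n1 Y)
             - hs X (master_rhs eps om La Om V u0 n0 Y)) =
  Ku V X Y * (u1 - u0) + \sum_(j < 2) Kn eps La Om j X Y * (n1 j - n0 j).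
Proof.
have -> : hs X (master_rhs eps om La Om V u1 n1 Y)
             - hs X (master_rhs eps om La Om V u0 n0 Y) =
   rC (u1 - u0) * hs X ((- iC R) *: comm V Y) +
   \sum_(j < 2) rC (n1 j - n0 j) *
     hs X ((- iC R) *: (rC (eps * La j) *: comm (Wm R j) Y)
           + rC (eps * Om j) *:
             (2%:R *: (sm R j *m Y *m sp R j) + 2%:R *: (sp R j *m Y *m sm R j)
              - 2%:R *: Y)).
  apply: (etrans (f_equal2 (fun a b => a - b) (hs_master eps om La Om V u1 n1 X Y)
                            (hs_master eps om La Om V u0 n0 X Y))).
  rewrite (hsZr (- iC R) X (comm V Y)).
  under [X in _ = _ + X]eq_bigr do rewrite hs_Kform.
  exact: (scal_id (- iC R) eps u1 u0 La Om n1 n0 (hs X (comm (H0 om) Y))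
     (hs X (comm V Y)) (hs X Y) (fun j => hs X (comm (Wm R j) Y))
     (fun j => hs X (sm R j *m Y *m sp R j)) (fun j => hs X (sp R j *m Y *m sm R j))
     (fun j => hs X (acomm (sp R j *m sm R j) Y))).
rewrite ReD Re_sum2 ReM_rC mulrC; congr (_ + _).
by apply: eq_bigr => j _; rewrite ReM_rC mulrC.
Qed.
End Alg.

Section Ana.
Variable R : realType.
Local Notation C := (R[i]).
Local Notation M4 := ('M[C]_(4, 4)).

Lemma Re_sum n (F : 'I_n -> C) : complex.Re (\sum_(j < n) F j) = \sum_(j < n) complex.Re (F j).
Proof.
apply: (big_morph (@complex.Re R)) => [x y|//]; exact: ReD.
Qed.

Lemma Re_conjM (x y : C) : complex.Re (Num.conj x * y) =
  complex.Re x * complex.Re y + complex.Im x * complex.Im y.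
Proof. by case: x => a b; case: y => c d /=; ring. Qed.

Lemma ReHs (X Y : M4) : complex.Re (hs X Y) =
  \sum_(a < 4) \sum_(b < 4) (complex.Re (X b a) * complex.Re (Y b a)
                            + complex.Im (X b a) * complex.Im (Y b a)).
Proof.
rewrite /hs /mxtrace Re_sum; apply: eq_bigr => a _.
rewrite mxE Re_sum; apply: eq_bigr => b _.
by rewrite !mxE Re_conjM.
Qed.

Lemma deriv_mul (F G : R -> R) (t dF dG : R) : is_derive t 1 F dF -> is_derive t 1 G dG ->
  is_derive t 1 (fun s => F s * G s) (F t * dG + G t * dF).
Proof. move=> hF hG; exact: (is_deriveM hF hG). Qed.

Lemma deriv_add (F G : R -> R) (t dF dG : R) : is_derive t 1 F dF -> is_derive t 1 G dG ->
  is_derive t 1 (fun s => F s + G s) (dF + dG).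
Proof. move=> hF hG; exact: (is_deriveD hF hG). Qed.

Lemma deriv_sub (F G : R -> R) (t dF dG : R) : is_derive t 1 F dF -> is_derive t 1 G dG ->
  is_derive t 1 (fun s => F s - G s) (dF - dG).
Proof. move=> hF hG; exact: (is_deriveB hF hG). Qed.

Lemma deriv_sum n (H : 'I_n -> R -> R) (dH : 'I_n -> R) (t : R) : (forall j, is_derive t 1 (H j) (dH j)) ->
  is_derive t 1 (fun s => \sum_(j < n) H j s) (\sum_(j < n) dH j).
Proof.
elim: n H dH => [|n IH] H dH hH.
  have -> : (fun s => \sum_(j < 0) H j s) = cst 0 by apply/funext => s; rewrite big_ord0.
  rewrite big_ord0; exact: is_derive_cst.
have -> : (fun s => \sum_(j < n.+1) H j s) =
   (fun s => \sum_(j < n) H (widen_ord (leqnSn n) j) s + H ord_max s).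
  by apply/funext => s; rewrite big_ord_recr.
rewrite big_ord_recr; apply: deriv_add => //; exact: IH.
Qed.

Lemma cont_mul (A : set R) (F G : R -> R) : {within A, continuous F} ->
  {within A, continuous G} -> {within A, continuous (fun s => F s * G s)}.
Proof. move=> cF cG x; exact: (continuousM (cF x) (cG x)). Qed.
Lemma cont_add (A : set R) (F G : R -> R) : {within A, continuous F} ->
  {within A, continuous G} -> {within A, continuous (fun s => F s + G s)}.
Proof. move=> cF cG x; exact: (continuousD (cF x) (cG x)). Qed.
Lemma cont_sub (A : set R) (F G : R -> R) : {within A, continuous F} ->
  {within A, continuous G} -> {within A, continuous (fun s => F s - G s)}.
Proof. move=> cF cG x; exact: (continuousB (cF x) (cG x)). Qed.
Lemma cont_sum (A : set R) n (H : 'I_n -> R -> R) :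
  (forall j, {within A, continuous (H j)}) ->
  {within A, continuous (fun s => \sum_(j < n) H j s)}.
Proof.
elim: n H => [|n IH] H hH.
  have -> : (fun s => \sum_(j < 0) H j s) = cst 0 by apply/funext => s; rewrite big_ord0.
  move=> x; exact: cst_continuous.
have -> : (fun s => \sum_(j < n.+1) H j s) =
   (fun s => \sum_(j < n) H (widen_ord (leqnSn n) j) s + H ord_max s).
  by apply/funext => s; rewrite big_ord_recr.
apply: cont_add => //; exact: IH.
Qed.

Lemma mono_seq (f g : R -> R) (s : seq R) : forall (a b : R),
  a <= b -> {within `[a, b], continuous f} ->
  (forall t, a < t < b -> t \notin s -> is_derive t 1 f (g t) /\ 0 <= g t) ->
  f a <= f b.
Proof.
elim: s => [|z s IH] a b leab cf hd.
  case: (ltgtP a b) leab => // [altb _|-> _]; last by rewrite lexx.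
  have hd' : forall x, x \in `]a, b[ -> is_derive x 1 f (g x) /\ 0 <= g x.
    by move=> x; rewrite in_itv /= => xab; apply: hd; rewrite ?in_nil.
  have [c cab E] := MVT altb (fun x xab => (hd' x xab).1) cf.
  rewrite -subr_ge0 E; apply: mulr_ge0; last by rewrite subr_ge0 ltW.
  exact: (hd' c cab).2.
have [zab|zab] := boolP ((a < z) && (z < b)).
  case/andP: zab => az zb.
  apply: (@le_trans _ _ (f z)).
    apply: IH; first exact: ltW.
      apply: continuous_subspaceW cf => x /=; rewrite !in_itv /= => /andP[-> xz].
      by rewrite (le_trans xz) // ltW.
    move=> t /andP[atz tz] tns; apply: hd; first by rewrite atz (lt_trans tz zb).
    by rewrite in_cons negb_or tns andbT; apply/eqP => tz'; rewrite tz' ltxx in tz.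
  apply: IH; first exact: ltW.
    apply: continuous_subspaceW cf => x /=; rewrite !in_itv /= => /andP[zx ->].
    by rewrite andbT (le_trans _ zx) // ltW.
  move=> t /andP[zt tb] tns; apply: hd; first by rewrite tb (lt_trans az zt).
  by rewrite in_cons negb_or tns andbT; apply/eqP => tz'; rewrite tz' ltxx in zt.
apply: IH => // t tab tns; apply: hd => //.
rewrite in_cons negb_or tns andbT; apply/eqP => tz; rewrite -tz in zab.
by rewrite tab in zab.
Qed.

Lemma mono_fin (f g : R -> R) (Z : set R) (a b : R) : finite_set Z ->
  a <= b -> {within `[a, b], continuous f} ->
  (forall t, a < t < b -> ~ Z t -> is_derive t 1 f (g t) /\ 0 <= g t) ->
  f a <= f b.
Proof.
move=> /finite_fsetP[X ->] leab cf hd.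
apply: (@mono_seq f g (finmap.enum_fset X)) => // t tab tX; apply: hd => //.
by move=> /= tX'; rewrite tX' in tX.
Qed.

Lemma ImB (x y : C) : complex.Im (x - y) = complex.Im x - complex.Im y.
Proof. by case: x; case: y. Qed.

Lemma key_alg (X A Y1 Y0 M1Y1 M1Y0 M0Y0 : M4) :
  hs A Y1 + hs X M1Y1 = 0 -> hs A Y0 + hs X M1Y0 = 0 ->
  complex.Re (hs X M1Y0 - hs X M0Y0) =
  complex.Re (hs X (M1Y1 - M0Y0)) + complex.Re (hs A (Y1 - Y0)).
Proof.
rewrite !hsBr => E1 E2; rewrite -ReD; congr (complex.Re _).
have -> : hs A Y1 = - hs X M1Y1 by apply/eqP; rewrite -addr_eq0 E1.
have -> : hs A Y0 = - hs X M1Y0 by apply/eqP; rewrite -addr_eq0 E2.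
ring.
Qed.
Lemma entryB (A B : M4) i j : (A - B) i j = A i j - B i j.
Proof. by rewrite !mxE. Qed.
End Ana.

Lemma pos_add (R : realType) (a b : R) : 0 < a -> 0 <= b -> 0 < a + b.
Proof. move=> *; lra. Qed.
Lemma pos_add' (R : realType) (a b : R) : 0 <= a -> 0 < b -> 0 < a + b.
Proof. move=> *; lra. Qed.

Theorem proposition2 (R : realType)
  (eps : R) (om La Om : 'I_2 -> R) (V : 'M[R[i]]_(4, 4))
  (T mu nmax : R) (rho0 rhotarget : 'M[R[i]]_(4, 4))
  (u0 : R -> R) (n0 : 'I_2 -> R -> R) (rho_k : R -> 'M[R[i]]_(4, 4))
  (u1 : R -> R) (n1 : 'I_2 -> R -> R) (chi1 rho_k1 : R -> 'M[R[i]]_(4, 4)) :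
  0 < eps -> (forall j, 0 < om j) -> (forall j, 0 < La j) ->
  (forall j, 0 < Om j) -> hermitian4 V ->
  0 < T -> 0 < mu -> 0 < nmax ->
  density rho0 -> density rhotarget ->
  admissible T mu nmax u0 n0 ->
  master_solution eps om La Om V T rho0 u0 n0 rho_k ->
  admissible T mu nmax u1 n1 ->
  adjoint_solution eps om La Om V T rhotarget u1 n1 chi1 ->
  master_solution eps om La Om V T rho0 u1 n1 rho_k1 ->
  (forall t, 0 <= t <= T ->
     argmax_on [set v | `|v| <= mu]
       (fun v => Ku V (chi1 t) (rho_k t) * v) (u1 t) /\
     forall j, argmax_on [set v | 0 <= v <= nmax]
       (fun v => Kn eps La Om j (chi1 t) (rho_k t) * v) (n1 j t)) ->
  [/\ (forall t, 0 <= t <= T ->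
         0 <= Ku V (chi1 t) (rho_k t) * (u1 t - u0 t)
              + \sum_(j < 2) Kn eps La Om j (chi1 t) (rho_k t)
                               * (n1 j t - n0 j t)),
      J1 T rhotarget rho_k <= J1 T rhotarget rho_k1
    & ((0 < lebesgue_measure
            ([set t | 0 <= t <= T /\ u1 t <> u0 t /\
                      Ku V (chi1 t) (rho_k t) <> 0])%R)%E \/
       (exists j : 'I_2, (0 < lebesgue_measure
            ([set t | 0 <= t <= T /\ n1 j t <> n0 j t /\
                      Kn eps La Om j (chi1 t) (rho_k t) <> 0])%R)%E)) ->
      J1 T rhotarget rho_k < J1 T rhotarget rho_k1].
Proof.
move=> eps0 om0 La0 Om0 hV T0 mu0 nmax0 drho0 [htg _ _] [_ _ adm0]
  [rk0 [crk [Zk [fZk drk]]]] [_ _ adm1] [chiT [cchi [Zc [fZc dchi]]]]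
  [r10 [cr1 [Z1 [fZ1 dr1]]]] amax.
set g := fun t => Ku V (chi1 t) (rho_k t) * (u1 t - u0 t)
              + \sum_(j < 2) Kn eps La Om j (chi1 t) (rho_k t) * (n1 j t - n0 j t).
set f := fun t => complex.Re (hs (chi1 t) (rho_k1 t - rho_k t)).
have termu : forall t, 0 <= t <= T -> 0 <= Ku V (chi1 t) (rho_k t) * (u1 t - u0 t).
  move=> t ht; have [[_ hu] hn] := amax t ht.
  have [hu0 hn0] := adm0 t ht.
  by rewrite mulrBr subr_ge0; apply: hu.
have termn : forall t j, 0 <= t <= T ->
    0 <= Kn eps La Om j (chi1 t) (rho_k t) * (n1 j t - n0 j t).
  move=> t j ht; have [[_ hu] hn] := amax t ht.
  have [hu0 hn0] := adm0 t ht.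
  rewrite mulrBr subr_ge0; apply: (hn j).2; exact: hn0.
have gpos : forall t, 0 <= t <= T -> 0 <= g t.
  move=> t ht; apply: addr_ge0; first exact: termu.
  by apply: sumr_ge0 => j _; apply: termn.
have fZ : finite_set (Zk `|` Zc `|` Z1) by rewrite !finite_setU.
have fE : f = fun s => \sum_(a < 4) \sum_(b < 4)
   (complex.Re (chi1 s b a) * (complex.Re (rho_k1 s b a) - complex.Re (rho_k s b a))
  + complex.Im (chi1 s b a) * (complex.Im (rho_k1 s b a) - complex.Im (rho_k s b a))).
  apply/funext => s; rewrite /f ReHs; apply: eq_bigr => a _; apply: eq_bigr => b _.
  by rewrite !mxE ReB ImB.
have fcont : {within `[0, T], continuous f}.
  rewrite fE; apply: cont_sum => a; apply: cont_sum => b.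
  apply: cont_add; apply: cont_mul; try apply: cont_sub.
  - exact: (cchi b a).1.
  - exact: (cr1 b a).1.
  - exact: (crk b a).1.
  - exact: (cchi b a).2.
  - exact: (cr1 b a).2.
  - exact: (crk b a).2.
have fder : forall t, 0 < t < T -> ~ (Zk `|` Zc `|` Z1) t ->
    is_derive t 1 f (g t) /\ 0 <= g t.
  move=> t tT tZ.
  have nk : ~ Zk t by move=> h; apply: tZ; left; left.
  have nc : ~ Zc t by move=> h; apply: tZ; left; right.
  have n1' : ~ Z1 t by move=> h; apply: tZ; right.
  split; last by apply: gpos; case/andP: tT => /ltW -> /ltW ->.
  set MR1 := master_rhs eps om La Om V (u1 t) (fun j => n1 j t) (rho_k1 t).
  set MR0 := master_rhs eps om La Om V (u0 t) (fun j => n0 j t) (rho_k t).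
  set AR := adjoint_rhs eps om La Om V (u1 t) (fun j => n1 j t) (chi1 t).
  have -> : g t = complex.Re (hs (chi1 t) (MR1 - MR0)) + complex.Re (hs AR (rho_k1 t - rho_k t)).
    rewrite /g /=.
    apply: (etrans (esym (@diff_identity R eps om La Om V (u1 t) (u0 t)
       (fun j => n1 j t) (fun j => n0 j t) (chi1 t) (rho_k t)))).
    apply: key_alg; exact: adjoint_identity.
  rewrite !ReHs -big_split; rewrite fE; apply: deriv_sum => a /=.
  rewrite -big_split; apply: deriv_sum => b /=.
  rewrite (@entryB R MR1 MR0) (@entryB R (rho_k1 t) (rho_k t)) !ReB !ImB.
  rewrite [complex.Re (AR b a) * _]mulrC [complex.Im (AR b a) * _]mulrC addrACA.
  apply: deriv_add; apply: deriv_mul.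
  - exact: (dchi t tT nc b a).1.
  - apply: deriv_sub; [exact: (dr1 t tT n1' b a).1 | exact: (drk t tT nk b a).1].
  - exact: (dchi t tT nc b a).2.
  - apply: deriv_sub; [exact: (dr1 t tT n1' b a).2 | exact: (drk t tT nk b a).2].
have fmono : forall x y, 0 <= x -> x <= y -> y <= T -> f x <= f y.
  move=> x y x0 xy yT; apply: (@mono_fin R f g _ x y fZ xy).
    apply: continuous_subspaceW fcont => s /=; rewrite !in_itv /= => /andP[xs sy].
    by rewrite (le_trans x0 xs) (le_trans sy yT).
  move=> t /andP[xt ty] tZ; apply: fder => //.
  by rewrite (le_lt_trans x0 xt) (lt_le_trans ty yT).
have f0 : f 0 = 0.
  by rewrite /f rk0 r10 subrr /hs mulmx0 mxtrace0.
have fT : f T = J1 T rhotarget rho_k1 - J1 T rhotarget rho_k.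
  rewrite /f chiT /hs htg /J1 mulmxBr raddfB /= -ReB.
  by rewrite mxtrace_mulC [\tr (rhotarget *m _)]mxtrace_mulC.
split.
- exact: gpos.
- have := fmono 0 T (lexx 0) (ltW T0) (lexx T).
  by rewrite f0 fT subr_ge0.
move=> hmeas; rewrite ltNge; apply/negP => hle.
have fzero : forall t, 0 <= t <= T -> f t = 0.
  move=> t /andP[t0 tT]; apply/eqP; rewrite eq_le; apply/andP; split.
    have := fmono t T t0 tT (lexx T); rewrite fT => h; lra.
  by have := fmono 0 t (lexx 0) t0 tT; rewrite f0.
have gzero : forall t, 0 < t < T -> ~ (Zk `|` Zc `|` Z1) t -> g t = 0.
  move=> t tT tZ; have [hd _] := fder t tT tZ.
  have hnear : \forall s \near t, f s = cst 0 s.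
    have tin : t \in `]0, T[ by rewrite in_itv /=.
    apply: filterS (near_in_itvoo tin) => s; rewrite in_itv /= => /andP[s0 sT].
    by rewrite fzero // !ltW.
  have hc := near_eq_is_derive hnear hd.
  by rewrite -(@derive_val _ _ _ _ _ _ _ hc) derive_cst.
have Ebad : forall t, 0 <= t <= T -> 0 < g t ->
    (Zk `|` Zc `|` Z1 `|` [set 0] `|` [set T]) t.
  move=> t /andP[t0 tT] gp.
  have [->|tnT] := eqVneq t T; first by right.
  have [->|tn0] := eqVneq t 0; first by left; right.
  left; left; apply: contrapT => tZ.
  have tT' : 0 < t < T by rewrite lt_def tn0 t0 /= lt_def eq_sym tnT tT.
  by move: gp; rewrite gzero // ltxx.
have fin2 : finite_set (Zk `|` Zc `|` Z1 `|` [set 0] `|` [set T]).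
  by rewrite !finite_setU; do !split => //; exact: finite_set1.
have meas0 : forall E : set R, (forall t, E t -> 0 <= t <= T /\ 0 < g t) ->
    lebesgue_measure E = 0%E.
  move=> E hE; apply: countable_lebesgue_measure0; apply: finite_set_countable.
  apply: sub_finite_set fin2 => t /hE [ht gp]; exact: Ebad.
case: hmeas => [hm|[j hm]].
  rewrite meas0 ?ltxx // in hm => t [ht [hne hK]]; split => //.
  rewrite /g; apply: pos_add; last by apply: sumr_ge0 => i _; apply: termn.
  rewrite lt_def termu // andbT mulf_neq0 //; first exact/eqP.
  by rewrite subr_eq0; apply/eqP.
rewrite meas0 ?ltxx // in hm => t [ht [hne hK]]; split => //.
rewrite /g; apply: pos_add'; first exact: termu.
rewrite (bigD1 j) //=; apply: pos_add; last by apply: sumr_ge0 => i _; apply: termn.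
rewrite lt_def termn // andbT mulf_neq0 //; first exact/eqP.
by rewrite subr_eq0; apply/eqP.
Qed.
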